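(* Under the standing assumptions of the context, for each fixed $l\ge l_0$ and any real $a<b$, $$\sup_{\omega\in[a,b]}\Big|S_l(\omega)-\Big(\prod_{j=1}^{n}m_l(\omega2^{-j})\Big)'\Big|\longrightarrow0\quad(n\to\infty),$$ where $S_l(\omega):=\sum_{j_0=1}^{\infty}2^{-j_0}m_l'(\omega2^{-j_0})\prod_{j\ge1,\,j\ne j_0}m_l(\omega2^{-j})$.
   Context: Let $\theta$ be odd, non-decreasing, $C^2$, with $\theta(\omega)=\pi/4$ for $\omega>\pi/3$; fix $\pi/3\le\omega_0<\pi/2$. Meyer scaling function (Fourier transform): $\widehat{\varphi^M}(\omega)=1$ for $|\omega|\le2\omega_0$, $=\cos(\frac\pi4+\theta(\frac{\pi}{3(\pi-2\omega_0)}(|\omega|-\pi)))$ for $2\omega_0<|\omega|\le2\pi-2\omega_0$, $=0$ otherwise. Meyer mask: $2\pi$-periodic $m^M$ with $m^M(\omega)=\widehat{\varphi^M}(2\omega)$ on $[-\pi,\pi]$. $\|\cdot\|_C$: sup norm on $[-\pi,\pi]$. A linear method of summation $(\lambda_{n,k})$ maps $f$ with Fourier coefficients $a_k,b_k$ to $u_n(f,\omega)=\frac{a_0}2+\sum_{k=1}^n\lambda_{n,k}(a_k\cos k\omega+b_k\sin k\omega)$. $m^M_l:=m^M/(\cos\frac\omega2)^{2l}$. Standing assumptions: a method and a sequence $n(l)$ are fixed with $u_l:=u_{n(l)}(m^M_l,\cdot)$, $u_{1,l}:=u_{n(l)}((m^M_l)',\cdot)$ satisfying $\|u_l-m^M_l\|_C=o(l^{-1})$,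 $\|u_{1,l}-(m^M_l)'\|_C=o(1)$, $u_l(\pi)\ne0$; $l_0$ is fixed with $\inf_{l\ge l_0}|u_l(0)|>0$. $m_l(\omega):=(\cos\frac\omega2)^{2l}u_l(\omega)/u_l(0)$ (a trigonometric polynomial with $m_l(0)=1$). *)

(* Defs.v *)
From Stdlib Require Import Reals.
From Coquelicot Require Import Coquelicot.
Open Scope R_scope.

Definition theta_ok (theta : R -> R) : Prop :=
  (forall x, theta (- x) = - theta x) /\
  (forall x y, x <= y -> theta x <= theta y) /\
  (forall x, ex_derive theta x) /\
  (forall x, ex_derive (Derive theta) x) /\
  (forall x, continuous (Derive (Derive theta)) x) /\
  (forall x, PI / 3 < x -> theta x = PI / 4).

Definition phiM_hat (theta : R -> R) (w0 w : R) : R :=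
  if Rle_dec (Rabs w) (2 * w0) then 1
  else if Rle_dec (Rabs w) (2 * PI - 2 * w0) then
    cos (PI / 4 + theta (PI / (3 * (PI - 2 * w0)) * (Rabs w - PI)))
  else 0.

Definition red2pi (w : R) : R :=
  w - 2 * PI * IZR (Int_part ((w + PI) / (2 * PI))).

Definition mM (theta : R -> R) (w0 w : R) : R := phiM_hat theta w0 (2 * red2pi w).

Definition mMl (theta : R -> R) (w0 : R) (l : nat) (w : R) : R :=
  mM theta w0 w / (cos (w / 2)) ^ (2 * l).

Definition fa (f : R -> R) (k : nat) : R := / PI * RInt (fun x => f x * cos (INR k * x)) (- PI) PI.
Definition fb (f : R -> R) (k : nat) : R := / PI * RInt (fun x => f x * sin (INR k * x)) (- PI) PI.

Definition u_meth (lam : nat -> nat -> R) (n : nat) (f : R -> R) (w : R) : R :=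
  fa f 0 / 2 + sum_n_m (fun k => lam n k * (fa f k * cos (INR k * w) + fb f k * sin (INR k * w))) 1 n.

Fixpoint prodm (m : R -> R) (n : nat) (w : R) : R :=
  match n with
  | O => 1
  | S n' => prodm m n' w * m (w / 2 ^ n)
  end.

Fixpoint prodm_except (m : R -> R) (j0 : nat) (N : nat) (w : R) : R :=
  match N with
  | O => 1
  | S N' => prodm_except m j0 N' w * (if Nat.eqb N j0 then 1 else m (w / 2 ^ N))
  end.

Definition infprod_except (m : R -> R) (j0 : nat) (w : R) : R :=
  real (Lim_seq (fun N => prodm_except m j0 N w)).

Definition S_of (m : R -> R) (w : R) : R :=
  Series (fun k => let j0 := S k in
            / 2 ^ j0 * Derive m (w / 2 ^ j0) * infprod_except m j0 w).

(* Main.v *)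
Require Import Defs.
From Stdlib Require Import Reals.
From Coquelicot Require Import Coquelicot.
From Stdlib Require Import Lra Lia Arith ZArith.
Open Scope R_scope.

Lemma pow2_pos n : 0 < 2 ^ n.
Proof. apply pow_lt; lra. Qed.

Lemma pow2_S n : 2 ^ S n = 2 * 2 ^ n.
Proof. reflexivity. Qed.

Lemma INR_lt_pow2 n : INR n < 2 ^ n.
Proof.
  induction n. simpl; lra.
  rewrite S_INR, pow2_S. assert (1 <= 2 ^ n) by (apply pow_R1_Rle; lra). lra.
Qed.

Lemma pow2_mono n k : (n <= k)%nat -> 2 ^ n <= 2 ^ k.
Proof. intros; apply Rle_pow; lra || auto. Qed.

Lemma small_geo C eps : 0 < eps -> exists N, forall n, (N <= n)%nat -> C / 2 ^ n <= eps.
Proof.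
  intros He. destruct (archimed (Rabs C / eps)) as [H1 _].
  assert (Hz : (0 <= up (Rabs C / eps))%Z).
  { apply le_IZR. assert (0 <= Rabs C / eps) by (apply Rdiv_le_0_compat; [apply Rabs_pos|lra]). lra. }
  exists (Z.to_nat (up (Rabs C / eps))). intros n Hn.
  assert (Hl : Rabs C / eps < 2 ^ n).
  { apply Rlt_le_trans with (INR n). 2: left; apply INR_lt_pow2.
    apply Rlt_le_trans with (IZR (up (Rabs C / eps))); [lra|].
    rewrite INR_IZR_INZ. apply IZR_le. apply inj_le in Hn. rewrite Z2Nat.id in Hn by lia. lia. }
  pose proof (pow2_pos n).
  apply Rle_trans with (Rabs C / 2 ^ n).
  { unfold Rdiv; apply Rmult_le_compat_r. left; apply Rinv_0_lt_compat; lra. apply RRle_abs. }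
  apply Rmult_le_reg_r with (2^n); auto. unfold Rdiv. rewrite Rmult_assoc, Rinv_l by lra.
  apply Rmult_le_reg_r with (/eps). apply Rinv_0_lt_compat; lra.
  rewrite Rmult_1_r. replace (eps * 2 ^ n * / eps) with (2 ^ n) by (field; lra). lra.
Qed.

Lemma geo_cauchy (u : nat -> R) (C : R) : 0 <= C ->
  (forall n, Rabs (u (S n) - u n) <= C / 2 ^ n) ->
  exists l, is_lim_seq u l /\ forall n, Rabs (l - u n) <= 2 * C / 2 ^ n.
Proof.
  intros HC Hu.
  assert (Hk : forall n k, Rabs (u (k + n)%nat - u n) <= 2 * C / 2 ^ n - 2 * C / 2 ^ (k + n)).
  { intros n k; induction k.
    - simpl. rewrite Rminus_eq_0, Rabs_R0. lra.
    - replace (u (S k + n)%nat - u n) with ((u (S (k + n)) - u (k+n)%nat) + (u (k + n)%nat - u n)) by (simpl; ring).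
      eapply Rle_trans. apply Rabs_triang. specialize (Hu (k+n)%nat).
      replace (2 * C / 2 ^ (S k + n)) with (C / 2 ^ (k + n)).
      lra. simpl. field. pose proof (pow2_pos (k+n)); lra. }
  assert (Hk' : forall n N, (n <= N)%nat -> Rabs (u N - u n) <= 2 * C / 2 ^ n).
  { intros n N HN. replace N with ((N - n) + n)%nat by lia.
    eapply Rle_trans. apply Hk. assert (0 <= 2 * C / 2 ^ (N - n + n)).
    { apply Rdiv_le_0_compat. lra. apply pow2_pos. } lra. }
  assert (Hc : ex_finite_lim_seq u).
  { apply ex_lim_seq_cauchy_corr. intros eps.
    destruct (small_geo (2 * C) (eps/4)) as [N HN]. destruct eps; simpl; lra.
    exists N. intros n m Hn Hm.
    replace (u n - u m) with ((u n - u N) - (u m - u N)) by ring.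
    eapply Rle_lt_trans. apply Rabs_triang. rewrite Rabs_Ropp.
    pose proof (Hk' N n Hn). pose proof (Hk' N m Hm). specialize (HN N (le_n _)).
    destruct eps; simpl in *; lra. }
  destruct Hc as [l Hl]. exists l. split. auto.
  intros n.
  assert (H := is_lim_seq_le_loc (fun N => Rabs (u N - u n)) (fun _ => 2 * C / 2 ^ n)
      (Rabs (l - u n)) (2 * C / 2 ^ n)).
  simpl in H. apply H.
  exists n. intros N HN. apply Hk'; auto.
  apply (is_lim_seq_abs _ (l - u n)). apply is_lim_seq_minus'. auto. apply is_lim_seq_const.
  apply is_lim_seq_const.
Qed.

Fixpoint sumk (f : nat -> R) (n : nat) : R :=
  match n with O => 0 | S n' => sumk f n' + f n' end.

Lemma sum_n_sumk f N : sum_n f N = sumk f (S N).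
Proof.
  induction N. rewrite sum_O; simpl; rewrite Rplus_0_l; reflexivity.
  unfold sum_n in *. rewrite sum_n_Sm by lia. rewrite IHN. simpl. unfold plus; simpl. ring.
Qed.

Lemma sumk_ext f g n : (forall k, (k < n)%nat -> f k = g k) -> sumk f n = sumk g n.
Proof. induction n; intros H; simpl; auto. rewrite IHn, H; auto. Qed.

Lemma sumk_minus f g n : sumk f n - sumk g n = sumk (fun k => f k - g k) n.
Proof. induction n; simpl; [ring| rewrite <- IHn; ring]. Qed.

Lemma sumk_mult_r f a n : sumk f n * a = sumk (fun k => f k * a) n.
Proof. induction n; simpl; [ring| rewrite <- IHn; ring]. Qed.

Lemma sumk_bound g c n : 0 <= c -> (forall k, (k < n)%nat -> Rabs (g k) <= c / 2 ^ S k) ->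
  Rabs (sumk g n) <= c.
Proof.
  intros Hc H.
  assert (forall p, (p <= n)%nat -> Rabs (sumk g p) <= c * (1 - / 2 ^ p)).
  { induction p; intros Hp. simpl. rewrite Rabs_R0. lra.
    simpl sumk. eapply Rle_trans. apply Rabs_triang.
    pose proof (IHp ltac:(lia)). pose proof (H p ltac:(lia)).
    replace (c * (1 - / 2 ^ S p)) with (c * (1 - / 2 ^ p) + c / 2 ^ S p). lra.
    simpl. field. pose proof (pow2_pos p). lra. }
  eapply Rle_trans. apply H0; auto. pose proof (pow2_pos n).
  assert (0 < / 2 ^ n) by (apply Rinv_0_lt_compat; lra). nra.
Qed.

Lemma prodm_except_big m j0 N w : (N < j0)%nat -> prodm_except m j0 N w = prodm m N w.
Proof.
  induction N; intros H; simpl; auto. rewrite IHN by lia.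
  destruct j0 as [|j]; [lia|]. replace (Nat.eqb N j) with false. reflexivity. symmetry; apply Nat.eqb_neq; lia.
Qed.

Lemma prodm_except_ne m j0 N w : j0 <> S N ->
  prodm_except m j0 (S N) w = prodm_except m j0 N w * m (w / 2 ^ S N).
Proof. intros H. simpl. destruct j0 as [|j]. reflexivity. replace (Nat.eqb N j) with false. reflexivity. symmetry; apply Nat.eqb_neq; lia. Qed.

Lemma is_derive_divc c w : c <> 0 -> is_derive (fun x => x / c) w (/ c).
Proof. intros. auto_derive; auto. field; auto. Qed.

Section Abs.
Variables (m m' : R -> R) (D : R).
Hypothesis Hd : forall x, is_derive m x (m' x).
Hypothesis HD : forall x, Rabs (m' x) <= D.
Hypothesis H0 : m 0 = 1.

Definition dprod n w := sumk (fun k => / 2 ^ S k * m' (w / 2 ^ S k) * prodm_except m (S k) n w) n.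

Lemma deriv_prod n w : is_derive (prodm m n) w (dprod n w).
Proof.
  induction n.
  - unfold dprod; simpl. apply (is_derive_const 1).
  - assert (Hc : is_derive (fun x => m (x / 2 ^ S n)) w (/ 2 ^ S n * m' (w / 2 ^ S n))).
    { apply (is_derive_comp m (fun x => x / 2 ^ S n)). apply Hd. apply is_derive_divc.
      pose proof (pow2_pos (S n)); lra. }
    pose proof (is_derive_mult _ _ _ _ _ IHn Hc ltac:(intros; apply Rmult_comm)) as HH.
    simpl in HH. unfold mult, plus in HH; simpl in HH.
    replace (dprod (S n) w) with (dprod n w * m (w / 2 ^ S n) + prodm m n w * (/ 2 ^ S n * m' (w / 2 ^ S n))).
    exact HH.
    unfold dprod. simpl sumk. rewrite prodm_except_big by lia. rewrite sumk_mult_r.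
    idtac.
    rewrite Rmult_comm with (r1 := prodm m n w). f_equal.
    apply sumk_ext. intros k Hk. replace (n =? k)%nat with false by (symmetry; apply Nat.eqb_neq; lia). simpl; ring.
    rewrite Nat.eqb_refl. simpl; ring.
Qed.


Lemma D_nonneg : 0 <= D.
Proof. pose proof (HD 0). pose proof (Rabs_pos (m' 0)). lra. Qed.

Lemma m_lip x : Rabs (m x - 1) <= D * Rabs x.
Proof.
  rewrite <- H0. replace (Rabs x) with (Rabs (x - 0)) by (f_equal; ring).
  apply (bounded_variation m m' D 0 x). intros; split; auto.
Qed.

Variables (K w : R).
Hypothesis Hw : Rabs w <= K.

Let q := D * K.

Lemma q_nonneg : 0 <= q.
Proof. unfold q. pose proof D_nonneg. pose proof (Rabs_pos w). nra. Qed.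

Lemma mj j : Rabs (m (w / 2 ^ j) - 1) <= q / 2 ^ j.
Proof.
  eapply Rle_trans. apply m_lip. pose proof (pow2_pos j).
  unfold Rdiv. rewrite Rabs_mult, Rabs_inv, (Rabs_pos_eq (2 ^ j)) by lra.
  unfold q. pose proof D_nonneg. assert (0 < / 2 ^ j) by (apply Rinv_0_lt_compat; lra).
  assert (0 <= D * (K - Rabs w)) by (apply Rmult_le_pos; lra). nra.
Qed.

Lemma if_bound j0 N : Rabs ((if Nat.eqb N j0 then 1 else m (w / 2 ^ N)) - 1) <= q / 2 ^ N.
Proof.
  destruct (Nat.eqb N j0). rewrite Rminus_eq_0, Rabs_R0. apply Rdiv_le_0_compat. apply q_nonneg. apply pow2_pos.
  apply mj.
Qed.

Lemma pe_bound j0 N : Rabs (prodm_except m j0 N w) <= exp q.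
Proof.
  assert (forall N, Rabs (prodm_except m j0 N w) <= exp (q * (1 - / 2 ^ N))).
  { induction N0. simpl. replace (q * (1 - / 1)) with 0 by field. rewrite Rabs_R1, exp_0; lra.
    change (prodm_except m j0 (S N0) w) with (prodm_except m j0 N0 w * (if Nat.eqb (S N0) j0 then 1 else m (w / 2 ^ S N0))). rewrite Rabs_mult.
    replace (q * (1 - / 2 ^ S N0)) with (q * (1 - / 2 ^ N0) + q / 2 ^ S N0)
      by (simpl; field; pose proof (pow2_pos N0); lra).
    rewrite exp_plus. apply Rmult_le_compat; try apply Rabs_pos; auto.
    eapply Rle_trans. 2: apply exp_ineq1_le.
    pose proof (if_bound j0 (S N0)).
    match goal with |- Rabs ?x <= _ => replace x with (1 + (x - 1)) by ring end.
    eapply Rle_trans. apply Rabs_triang. rewrite Rabs_R1. lra. }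
  eapply Rle_trans. apply H. apply exp_le_3 || idtac.
  pose proof (pow2_pos N). assert (0 < / 2 ^ N) by (apply Rinv_0_lt_compat; lra).
  pose proof q_nonneg.
  destruct (Req_dec q 0) as [E|E]. rewrite E, !Rmult_0_l; lra.
  left. apply exp_increasing. nra.
Qed.

Lemma pe_step j0 N : Rabs (prodm_except m j0 (S N) w - prodm_except m j0 N w) <= (exp q * q / 2) / 2 ^ N.
Proof.
  change (prodm_except m j0 (S N) w) with (prodm_except m j0 N w * (if Nat.eqb (S N) j0 then 1 else m (w / 2 ^ S N))).
  match goal with |- Rabs (?a * ?b - ?a) <= _ => replace (a * b - a) with (a * (b - 1)) by ring end.
  rewrite Rabs_mult. pose proof (if_bound j0 (S N)). pose proof (pe_bound j0 N).
  replace (exp q * q / 2 / 2 ^ N) with (exp q * (q / 2 ^ S N)) by (simpl; field; pose proof (pow2_pos N); lra).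
  apply Rmult_le_compat; auto; apply Rabs_pos.
Qed.

Lemma inf_bound j0 N : Rabs (infprod_except m j0 w - prodm_except m j0 N w) <= exp q * q / 2 ^ N.
Proof.
  destruct (geo_cauchy (fun N => prodm_except m j0 N w) (exp q * q / 2)) as [l [Hl Hb]].
  { pose proof q_nonneg. pose proof (exp_pos q). apply Rdiv_le_0_compat; [nra|lra]. }
  intros; apply pe_step.
  unfold infprod_except. rewrite (is_lim_seq_unique _ _ Hl). simpl.
  replace (exp q * q / 2 ^ N) with (2 * (exp q * q / 2) / 2 ^ N) by (field; pose proof (pow2_pos N); lra).
  apply Hb.
Qed.

Let B1 := 1 + exp q * q.

Lemma inf_abs j0 : Rabs (infprod_except m j0 w) <= B1.
Proof.
  pose proof (inf_bound j0 0). simpl in H. unfold B1.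
  replace (infprod_except m j0 w) with ((infprod_except m j0 w - 1) + 1) by ring.
  eapply Rle_trans. apply Rabs_triang. rewrite Rabs_R1. lra.
Qed.

Lemma B1_nonneg : 0 <= B1.
Proof. unfold B1. pose proof q_nonneg. pose proof (exp_pos q). nra. Qed.

Let t k := / 2 ^ S k * Derive m (w / 2 ^ S k) * infprod_except m (S k) w.

Lemma t_bound k : Rabs (t k) <= D * B1 / 2 ^ S k.
Proof.
  unfold t. rewrite (is_derive_unique _ _ _ (Hd _)).
  pose proof (pow2_pos (S k)). rewrite !Rabs_mult, Rabs_inv, (Rabs_pos_eq (2 ^ S k)) by lra.
  pose proof (HD (w / 2 ^ S k)). pose proof (inf_abs (S k)).
  assert (0 < / 2 ^ S k) by (apply Rinv_0_lt_compat; lra).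
  unfold Rdiv. rewrite (Rmult_comm (D * B1)). rewrite Rmult_assoc.
  apply Rmult_le_compat_l. lra. apply Rmult_le_compat; auto; apply Rabs_pos.
Qed.

Lemma series_bound n : Rabs (S_of m w - sum_n t n) <= (D * B1 / 2) / 2 ^ n.
Proof.
  destruct (geo_cauchy (sum_n t) (D * B1 / 4)) as [l [Hl Hb]].
  { pose proof D_nonneg; pose proof B1_nonneg. apply Rdiv_le_0_compat; [nra|lra]. }
  { intros N. unfold sum_n. rewrite sum_n_Sm by lia. unfold plus; simpl.
    replace (sum_n_m t 0 N + t (S N) - sum_n_m t 0 N) with (t (S N)) by ring.
    eapply Rle_trans. apply t_bound. right. simpl. field. pose proof (pow2_pos N); lra. }
  unfold S_of, Series. fold t.
  change (fun k => t k) with t.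
  rewrite (is_lim_seq_unique _ _ Hl). simpl.
  replace (D * B1 / 2 / 2 ^ n) with (2 * (D * B1 / 4) / 2 ^ n) by (field; pose proof (pow2_pos n); lra). apply Hb.
Qed.

Lemma total_bound n : Rabs (S_of m w - Derive (prodm m n) w) <= (D * B1 + D * exp q * q) / 2 ^ n.
Proof.
  rewrite (is_derive_unique _ _ _ (deriv_prod n w)).
  pose proof (series_bound n) as Hs. rewrite sum_n_sumk in Hs. simpl sumk in Hs.
  pose proof (t_bound n) as Ht.
  assert (Hd2 : Rabs (sumk t n - dprod n w) <= D * exp q * q / 2 ^ n).
  { unfold dprod. rewrite sumk_minus. apply sumk_bound.
    pose proof D_nonneg; pose proof q_nonneg; pose proof (exp_pos q).
    apply Rdiv_le_0_compat. apply Rmult_le_pos; nra. apply pow2_pos.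
    intros k Hk. unfold t. rewrite (is_derive_unique _ _ _ (Hd _)).
    match goal with |- Rabs (?a * ?b - ?a * ?c) <= _ => replace (a * b - a * c) with (a * (b - c)) by ring end.
    pose proof (pow2_pos (S k)). rewrite !Rabs_mult, Rabs_inv, (Rabs_pos_eq (2 ^ S k)) by lra.
    pose proof (HD (w / 2 ^ S k)). pose proof (inf_bound (S k) n).
    assert (0 < / 2 ^ S k) by (apply Rinv_0_lt_compat; lra).
    replace (D * exp q * q / 2 ^ n / 2 ^ S k) with (/ 2 ^ S k * (D * (exp q * q / 2 ^ n))) by (field; pose proof (pow2_pos n); lra).
    rewrite Rmult_assoc. apply Rmult_le_compat_l. lra. apply Rmult_le_compat; auto; apply Rabs_pos. }
  replace (S_of m w - dprod n w) with ((S_of m w - (sumk t n + t n)) + t n + (sumk t n - dprod n w)) by ring.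
  eapply Rle_trans. apply Rabs_triang. eapply Rle_trans. apply Rplus_le_compat_r. apply Rabs_triang.
  replace ((D * B1 + D * exp q * q) / 2 ^ n) with (D * B1 / 2 / 2 ^ n + D * B1 / 2 ^ S n + D * exp q * q / 2 ^ n)
    by (rewrite pow2_S; field; pose proof (pow2_pos n); lra).
  lra.
Qed.

End Abs.

Lemma abstract_main (m m' : R -> R) (D : R) :
  (forall x, is_derive m x (m' x)) -> (forall x, Rabs (m' x) <= D) -> m 0 = 1 ->
  forall a b, forall eps, 0 < eps -> exists N : nat, forall n : nat, (N <= n)%nat ->
      forall w, a <= w <= b -> Rabs (S_of m w - Derive (prodm m n) w) <= eps.
Proof.
  intros Hd HD H0 a b eps He.
  set (K := Rabs a + Rabs b).
  set (q := D * K). set (B1 := 1 + exp q * q).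
  destruct (small_geo (D * B1 + D * exp q * q) eps He) as [N HN].
  exists N. intros n Hn w Hw.
  eapply Rle_trans. apply (total_bound m m' D Hd HD H0 K w). 
  { unfold K. unfold Rabs; repeat destruct Rcase_abs; lra. }
  apply HN; auto.
Qed.

Lemma sum_deriv (f f' : nat -> R -> R) a b w :
  (forall k, is_derive (f k) w (f' k w)) ->
  is_derive (fun x => sum_n_m (fun k => f k x) a b) w (sum_n_m (fun k => f' k w) a b).
Proof.
  intros H. induction b.
  - destruct a.
    + rewrite sum_n_n. apply (is_derive_ext (f 0%nat)). intros t; rewrite sum_n_n; reflexivity. apply H.
    + rewrite sum_n_m_zero by lia. apply (is_derive_ext (fun _ => zero : R)).
      intros t; rewrite sum_n_m_zero by lia; reflexivity. apply (is_derive_const (zero : R)).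
  - destruct (le_lt_dec a b).
    + rewrite sum_n_Sm by lia.
      apply (is_derive_ext (fun x => plus (sum_n_m (fun k => f k x) a b) (f (S b) x))).
      intros t; rewrite sum_n_Sm by lia; reflexivity.
      apply (is_derive_plus _ _ w _ _ IHb (H _)).
    + destruct (Nat.eq_dec a (S b)).
      * subst. rewrite sum_n_n. apply (is_derive_ext (f (S b))). intros t; rewrite sum_n_n; reflexivity. apply H.
      * rewrite sum_n_m_zero by lia. apply (is_derive_ext (fun _ => zero : R)).
        intros t; rewrite sum_n_m_zero by lia; reflexivity. apply (is_derive_const (zero : R)).
Qed.

Lemma sum_bnd (g : nat -> R) (bb : nat -> R) a b :
  (forall k, Rabs (g k) <= bb k) -> Rabs (sum_n_m g a b) <= sum_n_m bb a b.
Proof.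
  intros H. eapply Rle_trans. apply (norm_sum_n_m g a b). apply sum_n_m_le. apply H.
Qed.

Lemma pow_abs_le1 x k : Rabs x <= 1 -> Rabs (x ^ k) <= 1.
Proof.
  intros H; induction k. simpl; rewrite Rabs_R1; lra.
  simpl. rewrite Rabs_mult. pose proof (Rabs_pos x). pose proof (Rabs_pos (x^k)). nra.
Qed.

Lemma trig_facts (c al be : nat -> R) (A : R) (n : nat) :
  exists T' : R -> R, exists B, 
  (forall w, is_derive (fun x => A + sum_n_m (fun k => c k * (al k * cos (INR k * x) + be k * sin (INR k * x))) 1 n) w (T' w)) /\
  forall w, Rabs (A + sum_n_m (fun k => c k * (al k * cos (INR k * w) + be k * sin (INR k * w))) 1 n) <= B /\ Rabs (T' w) <= B.
Proof.
  set (f' := fun k x => c k * (al k * (- sin (INR k * x) * INR k) + be k * (cos (INR k * x) * INR k))).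
  exists (fun w => sum_n_m (fun k => f' k w) 1 n).
  set (bb := fun k => Rabs (c k) * (Rabs (al k) + Rabs (be k)) * (1 + INR k)).
  exists (Rabs A + sum_n_m bb 1 n). split.
  - intros w.
    assert (Hder : forall k, is_derive (fun x => c k * (al k * cos (INR k * x) + be k * sin (INR k * x))) w (f' k w)).
    { intros k. unfold f'. auto_derive; auto. ring. }
    pose proof (is_derive_plus (fun _ => A) _ w _ _ (is_derive_const A w) (sum_deriv _ f' 1 n w Hder)) as Hp.
    unfold plus, zero in Hp; simpl in Hp. rewrite Rplus_0_l in Hp. exact Hp.
  - assert (Hb : forall k, 0 <= bb k).
    { intros k; unfold bb. pose proof (pos_INR k). pose proof (Rabs_pos (c k)).
      pose proof (Rabs_pos (al k)). pose proof (Rabs_pos (be k)).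
      apply Rmult_le_pos; [apply Rmult_le_pos|]; lra. }
    assert (Hs : 0 <= sum_n_m bb 1 n).
    { apply Rle_trans with (sum_n_m (fun _ => 0) 1 n).
      right. symmetry. apply (sum_n_m_const_zero (G:=R_AbelianMonoid) 1 n). apply sum_n_m_le; auto. }
    assert (Hk : forall k x, Rabs (al k * cos x + be k * sin x) <= Rabs (al k) + Rabs (be k)).
    { intros k x. eapply Rle_trans. apply Rabs_triang. rewrite !Rabs_mult.
      pose proof (COS_bound x) as [? ?]. pose proof (SIN_bound x) as [? ?].
      assert (Rabs (cos x) <= 1) by (unfold Rabs; destruct Rcase_abs; lra).
      assert (Rabs (sin x) <= 1) by (unfold Rabs; destruct Rcase_abs; lra).
      pose proof (Rabs_pos (al k)). pose proof (Rabs_pos (be k)).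
      pose proof (Rabs_pos (cos x)). pose proof (Rabs_pos (sin x)). nra. }
    intros w; split.
    + eapply Rle_trans. apply Rabs_triang. apply Rplus_le_compat_l. apply sum_bnd.
      intros k. rewrite Rabs_mult. unfold bb.
      assert (0 <= Rabs (c k) * (Rabs (al k)+Rabs (be k))) by (apply Rmult_le_pos; [apply Rabs_pos| pose proof (Rabs_pos (al k)); pose proof (Rabs_pos (be k)); lra]).
      apply Rle_trans with (Rabs (c k) * (Rabs (al k) + Rabs (be k))). apply Rmult_le_compat_l; [apply Rabs_pos|apply Hk].
      pose proof (pos_INR k). nra.
    + pose proof (Rabs_pos A). eapply Rle_trans. 2: { apply Rplus_le_compat_l. apply Rle_refl. }
      apply Rle_trans with (sum_n_m bb 1 n). 2: lra. apply sum_bnd.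
      intros k. unfold f'. rewrite Rabs_mult. unfold bb.
      replace (al k * (- sin (INR k * w) * INR k) + be k * (cos (INR k * w) * INR k))
        with ((al k * (- sin (INR k * w)) + be k * cos (INR k * w)) * INR k) by ring.
      rewrite Rabs_mult, (Rabs_pos_eq (INR k)) by apply pos_INR.
      assert (Rabs (al k * - sin (INR k * w) + be k * cos (INR k * w)) <= Rabs (al k) + Rabs (be k)).
      { eapply Rle_trans. apply Rabs_triang. rewrite !Rabs_mult, Rabs_Ropp.
        pose proof (Hk k (INR k * w)). pose proof (COS_bound (INR k * w)) as [? ?]. pose proof (SIN_bound (INR k * w)) as [? ?].
        assert (Rabs (cos (INR k * w)) <= 1) by (unfold Rabs; destruct Rcase_abs; lra).
        assert (Rabs (sin (INR k * w)) <= 1) by (unfold Rabs; destruct Rcase_abs; lra).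
        pose proof (Rabs_pos (al k)). pose proof (Rabs_pos (be k)).
        pose proof (Rabs_pos (cos (INR k * w))). pose proof (Rabs_pos (sin (INR k * w))). nra. }
      apply Rle_trans with (Rabs (c k) * ((Rabs (al k) + Rabs (be k)) * INR k)).
      apply Rmult_le_compat_l; [apply Rabs_pos|]. apply Rmult_le_compat_r; [apply pos_INR|auto].
      assert (0 <= Rabs (c k) * (Rabs (al k)+Rabs (be k))) by (apply Rmult_le_pos; [apply Rabs_pos| pose proof (Rabs_pos (al k)); pose proof (Rabs_pos (be k)); lra]).
      nra.
Qed.

Theorem lemma11
  (theta : R -> R) (w0 : R) (lam : nat -> nat -> R) (nl : nat -> nat) (l0 : nat)
  (Htheta : theta_ok theta)
  (Hw0 : PI / 3 <= w0 < PI / 2)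
  (Hu : forall eps, 0 < eps -> exists L : nat, forall l : nat, (L <= l)%nat ->
          forall w, - PI <= w <= PI ->
            INR l * Rabs (u_meth lam (nl l) (mMl theta w0 l) w - mMl theta w0 l w) <= eps)
  (Hu1 : forall eps, 0 < eps -> exists L : nat, forall l : nat, (L <= l)%nat ->
          forall w, - PI <= w <= PI ->
            Rabs (u_meth lam (nl l) (Derive (mMl theta w0 l)) w
                  - Derive (mMl theta w0 l) w) <= eps)
  (Hpi : forall l : nat, u_meth lam (nl l) (mMl theta w0 l) PI <> 0)
  (Hl0 : exists c, 0 < c /\ forall l : nat, (l0 <= l)%nat ->
          c <= Rabs (u_meth lam (nl l) (mMl theta w0 l) 0)) :
  let ml := fun (l : nat) (w : R) =>
    (cos (w / 2)) ^ (2 * l) * u_meth lam (nl l) (mMl theta w0 l) w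
      / u_meth lam (nl l) (mMl theta w0 l) 0 in
  forall l : nat, (l0 <= l)%nat -> forall a b : R, a < b ->
    forall eps, 0 < eps -> exists N : nat, forall n : nat, (N <= n)%nat ->
      forall w, a <= w <= b ->
        Rabs (S_of (ml l) w - Derive (prodm (ml l) n) w) <= eps.
Proof.
  intros ml l Hl a b Hab eps He.
  destruct Hl0 as [c0 [Hc0 Hc]]. specialize (Hc l Hl).
  set (f := mMl theta w0 l) in *. set (n := nl l) in *.
  set (T := u_meth lam n f) in *.
  destruct (trig_facts (lam n) (fa f) (fb f) (fa f 0 / 2) n) as [T' [B [HdT HbT]]].
  assert (HdT' : forall w, is_derive T w (T' w)) by exact HdT.
  assert (HbT' : forall w, Rabs (T w) <= B /\ Rabs (T' w) <= B) by exact HbT.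
  clear HdT HbT.
  set (T0 := T 0) in *.
  assert (HT0 : T0 <> 0).
  { intros E. rewrite E, Rabs_R0 in Hc. lra. }
  assert (HB : 0 <= B) by (destruct (HbT' 0); pose proof (Rabs_pos (T 0)); lra).
  set (h' := fun w => INR (2 * l) * (- sin (w / 2) * / 2) * cos (w / 2) ^ pred (2 * l)).
  set (m' := fun w => (h' w * T w + cos (w / 2) ^ (2 * l) * T' w) / T0).
  set (D := (INR (2 * l) * B + B) / Rabs T0).
  assert (Hh : forall w : R, is_derive (fun x => cos (x / 2) ^ (2 * l)) w (h' w)).
  { intros w. unfold h'. apply (is_derive_pow (fun x => cos (x / 2))). auto_derive; auto. rewrite Rmult_1_l, Rmult_comm; reflexivity. }
  assert (Hder : forall x : R, is_derive (ml l) x (m' x)).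
  { intros x. pose proof (is_derive_mult _ _ _ _ _ (Hh x) (HdT' x) ltac:(intros; apply Rmult_comm)) as Hp.
    pose proof (is_derive_mult _ _ _ _ _ Hp (is_derive_const (/ T0) x) ltac:(intros; apply Rmult_comm)) as Hq.
    unfold mult, plus, zero in Hq; simpl in Hq.
    unfold ml. fold n f T T0.
    replace (m' x) with ((h' x * T x + cos (x / 2) ^ (2*l) * T' x) * / T0 + cos (x / 2) ^ (2*l) * T x * 0)
      by (unfold m'; unfold Rdiv; ring).
    exact Hq. }
  assert (Hbd : forall x, Rabs (m' x) <= D).
  { intros x. unfold m', D. unfold Rdiv. rewrite Rabs_mult, Rabs_inv.
    assert (0 < Rabs T0) by (apply Rabs_pos_lt; auto).
    apply Rmult_le_compat_r. left; apply Rinv_0_lt_compat; auto.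
    eapply Rle_trans. apply Rabs_triang. rewrite !Rabs_mult.
    destruct (HbT' x) as [H1 H2].
    assert (Hc1 : Rabs (cos (x / 2)) <= 1).
    { pose proof (COS_bound (x/2)) as [? ?]. unfold Rabs; destruct Rcase_abs; lra. }
    assert (Hs1 : Rabs (sin (x / 2)) <= 1).
    { pose proof (SIN_bound (x/2)) as [? ?]. unfold Rabs; destruct Rcase_abs; lra. }
    pose proof (pow_abs_le1 _ (2 * l) Hc1). pose proof (pow_abs_le1 _ (pred (2 * l)) Hc1).
    assert (Hh1 : Rabs (h' x) <= INR (2 * l)).
    { unfold h'. rewrite !Rabs_mult, Rabs_Ropp, Rabs_inv, (Rabs_pos_eq 2) by lra.
      rewrite (Rabs_pos_eq (INR (2 * l))) by apply pos_INR. pose proof (pos_INR (2 * l)).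
      pose proof (Rabs_pos (sin (x / 2))). pose proof (Rabs_pos (cos (x / 2) ^ pred (2 * l))).
      apply Rle_trans with (INR (2 * l) * (1 * / 2) * 1).
      apply Rmult_le_compat; try apply Rabs_pos; try lra.
      apply Rmult_le_pos; [lra|]. apply Rmult_le_pos; lra.
      apply Rmult_le_compat_l; [lra|]. apply Rmult_le_compat_r; lra. lra. }
    apply Rplus_le_compat.
    apply Rmult_le_compat; try apply Rabs_pos; auto.
    rewrite <- (Rmult_1_l B). apply Rmult_le_compat; try apply Rabs_pos; auto. }
  assert (H1 : ml l 0 = 1).
  { unfold ml. fold n f T T0. replace (0 / 2) with 0 by field. rewrite cos_0, pow1. field; auto. }
  exact (abstract_main (ml l) m' D Hder Hbd H1 a b eps He).
Qed.
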